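(* For continuous functions defined using arithmetic circuits, the sequence of fixpoints along the path given by the linear homotopy $\mathcal{F}_t=(1-t)\mathcal{F}_0+t\mathcal{F}_1$ can have exponentially many alternations of the value of $t$: there are, for each $n$, continuous functions $\mathcal{F}_0,\mathcal{F}_1:[0,1]^3\to[0,1]^3$ computed by linear arithmetic circuits of size polynomial in $n$, with $\mathcal{F}_0$ having a unique fixpoint, such that along the path of fixpoints of $\mathcal{F}_t$ starting at the fixpoint of $\mathcal{F}_0$ (at $t=0$) and ending at a fixpoint of $\mathcal{F}_1$ (at $t=1$), the parameter $t$ changes direction a number of times exponential in $n$.
   Context: A linear arithmetic circuit computes a function $[0,1]^3\to[0,1]^3$ using gates whose inputs and outputs lie in $[0,1]$ (results truncated to $[0,1]$): sum, difference, max, min of two inputs, multiplication of an input by a constant, constants, and comparator gates (output $1$ if first input exceeds second, $0$ if smaller, arbitrary if equal). The path of fixpoints is a connected set of pairs $(x,t)$ with $\mathcal{F}_t(x)=x$. *)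

(* Defs.v *)
From HB Require Import structures.
From mathcomp Require Import all_boot all_order all_algebra.
From mathcomp Require Import all_classical all_reals all_analysis.
Set Implicit Arguments. Unset Strict Implicit. Unset Printing Implicit Defensive.
Import Order.TTheory GRing.Theory Num.Theory.
Import numFieldNormedType.Exports.
Local Open Scope classical_set_scope.
Local Open Scope ring_scope.

(* A circuit is a list of gates; gate number k may only refer to      *)
(* gates with index < k (checked by [circuit_wf]).                     *)
Inductive gate : Type :=
  | GIn    of 'I_3
  | GConst of rat
  | GAdd   of nat & nat
  | GSub   of nat & nat
  | GMax   of nat & nat
  | GMin   of nat & nat
  | GScale of rat & nat
  | GCmp   of nat & nat.

Record circuit := Circuit { gates : seq gate; outs : 'I_3 -> nat }.

Definition gate_refs_lt (k : nat) (g : gate) : bool :=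
  match g with
  | GIn _ | GConst _ => true
  | GAdd a b | GSub a b | GMax a b | GMin a b | GCmp a b => ((a < k) && (b < k))%N
  | GScale _ a => (a < k)%N
  end.

Definition circuit_wf (C : circuit) : Prop :=
  (forall k, (k < size (gates C))%N -> gate_refs_lt k (nth (GConst 0) (gates C) k))
  /\ (forall j : 'I_3, (outs C j < size (gates C))%N).

Definition rat_bitsize (q : rat) : nat :=
  (trunc_log 2 `|numq q|%N).+1 + (trunc_log 2 `|denq q|%N).+1.

Definition gate_size (g : gate) : nat :=
  match g with
  | GConst c | GScale c _ => 1 + rat_bitsize c
  | _ => 1
  end.

Definition circuit_size (C : circuit) : nat := \sum_(g <- gates C) gate_size g.

Section Semantics.
Variable R : realType.

Definition clamp01 (y : R) : R := Num.min 1 (Num.max 0 y).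

Definition in_cube (x : 'rV[R]_3) : Prop := forall i : 'I_3, 0 <= x ord0 i <= 1.
Definition cube : set 'rV[R]_3 := [set x | in_cube x].

Definition gate_ok (x : 'rV[R]_3) (v : nat -> R) (k : nat) (g : gate) : Prop :=
  match g with
  | GIn i => v k = x ord0 i
  | GConst c => v k = clamp01 (ratr c)
  | GAdd a b => v k = clamp01 (v a + v b)
  | GSub a b => v k = clamp01 (v a - v b)
  | GMax a b => v k = clamp01 (Num.max (v a) (v b))
  | GMin a b => v k = clamp01 (Num.min (v a) (v b))
  | GScale c a => v k = clamp01 (ratr c * v a)
  | GCmp a b => (v b < v a -> v k = 1) /\ (v a < v b -> v k = 0) /\ 0 <= v k <= 1
  end.

Definition valuation (C : circuit) (x : 'rV[R]_3) (v : nat -> R) : Prop :=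
  forall k, (k < size (gates C))%N -> gate_ok x v k (nth (GConst 0) (gates C) k).

Definition computes (C : circuit) (F : 'rV[R]_3 -> 'rV[R]_3) : Prop :=
  circuit_wf C /\
  forall x, in_cube x ->
    (exists v, valuation C x v) /\
    (forall v, valuation C x v -> forall j : 'I_3, v (outs C j) = F x ord0 j).

Definition homotopy (F0 F1 : 'rV[R]_3 -> 'rV[R]_3) (t : R) (x : 'rV[R]_3) :
  'rV[R]_3 := (1 - t) *: F0 x + t *: F1 x.

Definition is_fixpt_pair (F0 F1 : 'rV[R]_3 -> 'rV[R]_3) (p : 'rV[R]_3 * R) : Prop :=
  in_cube p.1 /\ 0 <= p.2 <= 1 /\ homotopy F0 F1 p.2 p.1 = p.1.

Definition fixpoint_path (F0 F1 : 'rV[R]_3 -> 'rV[R]_3) (x0 : 'rV[R]_3)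
    (gam : R -> 'rV[R]_3 * R) : Prop :=
  {within `[0, 1]%classic, continuous gam} /\
  (forall s, 0 <= s <= 1 -> is_fixpt_pair F0 F1 (gam s)) /\
  gam 0 = (x0, 0) /\ (gam 1).2 = 1.

Definition t_direction_changes_ge (gam : R -> 'rV[R]_3 * R) (K : nat) : Prop :=
  exists s : nat -> R,
    0 <= s 0%N /\ s K.+1 <= 1 /\
    (forall i, (i <= K)%N -> s i < s i.+1) /\
    (forall i, (i < K)%N ->
       ((gam (s i.+1)).2 - (gam (s i)).2) * ((gam (s i.+2)).2 - (gam (s i.+1)).2) < 0).

End Semantics.

(* Main.v *)
Require Import Defs.
From HB Require Import structures.
From mathcomp Require Import all_boot all_order all_algebra.
From mathcomp Require Import all_classical all_reals all_analysis.
From mathcomp Require Import zify ring lra.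
Import Order.TTheory GRing.Theory Num.Theory.
Import numFieldNormedType.Exports.
Local Open Scope classical_set_scope.
Local Open Scope ring_scope.
Set Implicit Arguments. Unset Strict Implicit.

Section Gen.
Variable R : realType.
Implicit Types (x : 'rV[R]_3).

Definition gval x (vs : seq R) (g : gate) : R :=
  match g with
  | GIn i => x ord0 i
  | GConst c => clamp01 (ratr c)
  | GAdd a b => clamp01 (nth 0 vs a + nth 0 vs b)
  | GSub a b => clamp01 (nth 0 vs a - nth 0 vs b)
  | GMax a b => clamp01 (Num.max (nth 0 vs a) (nth 0 vs b))
  | GMin a b => clamp01 (Num.min (nth 0 vs a) (nth 0 vs b))
  | GScale c a => clamp01 (ratr c * nth 0 vs a)
  | GCmp _ _ => 0
  end.

Definition evals x (gs : seq gate) : seq R :=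
  foldl (fun vs g => rcons vs (gval x vs g)) [::] gs.

Lemma evals_rcons x gs g :
  evals x (rcons gs g) = rcons (evals x gs) (gval x (evals x gs) g).
Proof. by rewrite /evals foldl_rcons. Qed.

Lemma size_evals x gs : size (evals x gs) = size gs.
Proof.
elim/last_ind: gs => [//|gs g IH].
by rewrite evals_rcons !size_rcons IH.
Qed.

Definition ev x gs k := nth 0 (evals x gs) k.

Lemma evals_prefix x s1 s2 i : (i < size s1)%N ->
  nth 0 (evals x (s1 ++ s2)) i = nth 0 (evals x s1) i.
Proof.
move=> hi; elim/last_ind: s2 => [|s2 g IH]; first by rewrite cats0.
rewrite -rcons_cat evals_rcons nth_rcons size_evals size_cat.
by rewrite (ltn_addr _ hi).
Qed.

Lemma ev_take x gs k : (k < size gs)%N ->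
  ev x gs k = gval x (evals x (take k gs)) (nth (GConst 0) gs k).
Proof.
move=> hk; rewrite /ev.
have h := @evals_prefix x (take k.+1 gs) (drop k.+1 gs) k.
rewrite cat_take_drop in h; rewrite h; last first.
  by rewrite size_take; case: ifP => // _; exact: hk.
rewrite (take_nth (GConst 0) hk) evals_rcons nth_rcons size_evals size_take hk.
by rewrite ltnn eqxx.
Qed.

Lemma gval_ext x k vs1 vs2 g : gate_refs_lt k g ->
  (forall a, (a < k)%N -> nth 0 vs1 a = nth 0 vs2 a) ->
  gval x vs1 g = gval x vs2 g.
Proof.
case: g => //= [a b|a b|a b|a b|c a] ; rewrite ?andbT;
  try (move=> /andP[ha hb] e; by rewrite !e).
by move=> ha e; rewrite e.
Qed.

Lemma ev_gate x gs k : (k < size gs)%N ->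
  gate_refs_lt k (nth (GConst 0) gs k) ->
  ev x gs k = gval x (evals x gs) (nth (GConst 0) gs k).
Proof.
move=> hk hr; rewrite ev_take //. apply: (@gval_ext x k _ _ _ hr) => a ha.
rewrite -{2}(cat_take_drop k gs) evals_prefix // size_take hk //.
Qed.

Definition nocmp (g : gate) : bool := if g is GCmp _ _ then false else true.

Lemma valuation_ev C x : circuit_wf C -> all nocmp (gates C) ->
  valuation C x (ev x (gates C)).
Proof.
move=> [wf _] /(all_nthP (GConst 0)) nc k hk; rewrite /gate_ok.
have := nc _ hk.
rewrite (@ev_gate x _ _ hk (wf k hk)).
by case: (nth (GConst 0) (gates C) k).
Qed.

Lemma valuation_uniq C x v : circuit_wf C -> valuation C x v ->
  all nocmp (gates C) ->
  forall k, (k < size (gates C))%N -> v k = ev x (gates C) k.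
Proof.
move=> [wf _] hv /(all_nthP (GConst 0)) nc k.
elim/ltn_ind: k => k IH hk.
have := hv k hk; have := wf k hk; have := nc _ hk.
rewrite (@ev_gate x _ _ hk (wf k hk)).
case: (nth (GConst 0) (gates C) k) => //= [a b|a b|a b|a b|c a] _;
  rewrite ?andbT; try (move=> /andP[ha hb] ->;
  by rewrite !IH // (ltn_trans _ hk)).
by move=> ha ->; rewrite IH // (ltn_trans _ hk).
Qed.

Definition Fof C x : 'rV[R]_3 := \row_j ev x (gates C) (outs C j).

Lemma computes_Fof C : circuit_wf C -> all nocmp (gates C) -> computes C (Fof C).
Proof.
move=> wf nc; split => // x _; split; first by exists (ev x (gates C)); exact: valuation_ev.
move=> v hv j; rewrite mxE; apply: valuation_uniq => //.
by case: wf => _ ->.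
Qed.

Lemma cD (T : topologicalType) (V : normedModType R) (f g : T -> V) :
  continuous f -> continuous g -> continuous (fun y => f y + g y).
Proof. by move=> cf cg y; exact: (continuousD (cf y) (cg y)). Qed.
Lemma cB (T : topologicalType) (V : normedModType R) (f g : T -> V) :
  continuous f -> continuous g -> continuous (fun y => f y - g y).
Proof. by move=> cf cg y; exact: (continuousB (cf y) (cg y)). Qed.
Lemma cZr (T : topologicalType) (V : normedModType R) (f : T -> R) (a : V) :
  continuous f -> continuous (fun y => f y *: a).
Proof. by move=> cf y; exact: (@continuousZr_tmp _ _ _ f a y (cf y)). Qed.
Lemma cM (T : topologicalType) (f g : T -> R) :
  continuous f -> continuous g -> continuous (fun y => f y * g y).
Proof. by move=> cf cg y; exact: (continuousM (cf y) (cg y)). Qed.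
Lemma cmax (T : topologicalType) (f g : T -> R) :
  continuous f -> continuous g -> continuous (fun y => Num.max (f y) (g y)).
Proof. by move=> cf cg y; exact: (continuous_max (cf y) (cg y)). Qed.
Lemma cmin (T : topologicalType) (f g : T -> R) :
  continuous f -> continuous g -> continuous (fun y => Num.min (f y) (g y)).
Proof. by move=> cf cg y; exact: (continuous_min (cf y) (cg y)). Qed.
Lemma ccst (T : topologicalType) (V : topologicalType) (a : V) :
  continuous (fun _ : T => a).
Proof. by move=> y; exact: cst_continuous. Qed.

Lemma clamp_cont (T : topologicalType) (f : T -> R) :
  continuous f -> continuous (fun y => clamp01 (f y)).
Proof.
move=> cf t; rewrite /clamp01.
apply: (@continuous_min _ _ (fun _ => 1) (fun y => Num.max 0 (f y))).
  exact: cst_continuous.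
apply: (@continuous_max _ _ (fun _ => 0) f); first exact: cst_continuous.
exact: cf.
Qed.

Lemma ev_cont gs k : continuous (fun x => ev x gs k).
Proof.
elim/last_ind: gs k => [k|gs g IH k].
  by rewrite /ev /evals /= => x; exact: cst_continuous.
rewrite /ev; under eq_fun do rewrite evals_rcons nth_rcons size_evals.
case: ltnP => _; first exact: IH.
case: eqP => _; last by move=> x; exact: cst_continuous.
case: g => [i|c|a b|a b|a b|a b|c a|a b] /=.
- exact: coord_continuous.
- by move=> x; exact: cst_continuous.
- by apply: clamp_cont; apply: cD; exact: IH.
- by apply: clamp_cont; apply: cB; exact: IH.
- by apply: clamp_cont; apply: cmax; exact: IH.
- by apply: clamp_cont; apply: cmin; exact: IH.
- by apply: clamp_cont; apply: cM; [exact: ccst|exact: IH].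
- by move=> x; exact: cst_continuous.
Qed.

Lemma row3_cont (T : topologicalType) (h : 'I_3 -> T -> R) :
  (forall j, continuous (h j)) -> continuous (fun y => \row_j h j y : 'rV[R]_3).
Proof.
move=> ch.
have -> : (fun y => \row_j h j y : 'rV[R]_3) =
  fun y => \sum_(j < 3) h j y *: (delta_mx 0 j : 'rV[R]_3).
  apply/funext => y; apply/rowP => j; rewrite mxE summxE.
  rewrite (bigD1 j) //= big1 ?addr0; first by rewrite !mxE !eqxx mulr1.
  move=> i /negbTE ij; by rewrite !mxE eq_sym ij andbF mulr0.
under eq_fun do rewrite !big_ord_recr big_ord0 /= add0r.
by apply: cD; [apply: cD|]; apply: cZr; exact: ch.
Qed.

Lemma Fof_cont C : continuous (Fof C).
Proof. by apply: row3_cont => j; exact: ev_cont. Qed.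

End Gen.

Unset Implicit Arguments. Set Strict Implicit.

Definition hlf : rat := 2%:R^-1.
Definition qtr : rat := 4%:R^-1.
Definition i1 : 'I_3 := @Ordinal 3 1 isT.
Definition i2 : 'I_3 := @Ordinal 3 2 isT.

Definition layer (j : nat) : seq gate :=
  [:: GSub 2 (4+3*j); GMin (4+3*j) (5+3*j); GAdd (6+3*j) (6+3*j)].
Fixpoint layers (n : nat) : seq gate :=
  if n is m.+1 then layers m ++ layer m else [::].
Definition pre : seq gate := [:: GIn ord0; GIn i1; GConst 1; GConst 0; GMax 0 0].
Definition post (m : nat) : seq gate :=
  [:: GScale hlf 0; GScale hlf 1; GAdd (m+1) (m+2); GScale qtr 0;
      GScale qtr m; GAdd (m+4) (m+5); GSub (m+3) (m+6); GAdd (m+7) (m+7)].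
Definition gs (n : nat) : seq gate := pre ++ layers n ++ post (4 + 3 * n).

Lemma size_layers n : size (layers n) = (3 * n)%N.
Proof. by elim: n => //= n IH; rewrite size_cat IH /=; lia. Qed.

Lemma size_gs n : size (gs n) = (13 + 3 * n)%N.
Proof. by rewrite /gs !size_cat size_layers /=; lia. Qed.

Lemma nth_layers n j i : (j < n)%N -> (i < 3)%N ->
  nth (GConst 0) (layers n) (3 * j + i) = nth (GConst 0) (layer j) i.
Proof.
elim: n => // n IH hj hi /=; rewrite nth_cat size_layers.
case: (ltnP j n) => hjn.
  by rewrite ifT ?IH //; lia.
have -> : j = n by lia.
by rewrite ifF; [congr nth; lia | lia].
Qed.

Lemma nth_gs_layer n j i : (j < n)%N -> (i < 3)%N ->
  nth (GConst 0) (gs n) (5 + 3 * j + i) = nth (GConst 0) (layer j) i.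
Proof.
move=> hj hi; rewrite /gs nth_cat /=.
rewrite nth_cat size_layers ifT; last by lia.
by rewrite -(@nth_layers n j i hj hi); congr nth; lia.
Qed.

Lemma nth_gs_post n i :
  nth (GConst 0) (gs n) (5 + 3 * n + i) = nth (GConst 0) (post (4 + 3 * n)) i.
Proof.
rewrite /gs nth_cat /=.
rewrite nth_cat size_layers ifF; last by lia.
by congr nth; lia.
Qed.

Lemma nth_gs_pre n k : (k < 5)%N -> nth (GConst 0) (gs n) k = nth (GConst 0) pre k.
Proof. by move=> hk; rewrite /gs nth_cat /= hk. Qed.

Lemma gs_wf_k n k : (k < size (gs n))%N -> gate_refs_lt k (nth (GConst 0) (gs n) k).
Proof.
rewrite size_gs => hk.
case: (ltnP k 5) => h5.
  by rewrite nth_gs_pre //; case: k h5 {hk} => [|[|[|[|[|]]]]].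
case: (ltnP k (5 + 3 * n)) => hl.
  have -> : k = (5 + 3 * ((k - 5) %/ 3) + (k - 5) %% 3)%N.
    have := divn_eq (k - 5) 3; lia.
  rewrite nth_gs_layer; last 2 first.
  - have := divn_eq (k - 5) 3; have := ltn_pmod (k - 5) (isT : (0 < 3)%N); lia.
  - by rewrite ltn_pmod.
  move: (ltn_pmod (k - 5) (isT : (0 < 3)%N)).
  set q := ((k - 5) %/ 3)%N; case: ((k - 5) %% 3)%N => [|[|[|]]] //= _; lia.
have -> : k = (5 + 3 * n + (k - (5 + 3 * n)))%N by lia.
rewrite nth_gs_post.
have : (k - (5 + 3 * n) < 8)%N by lia.
by case: (k - (5 + 3 * n))%N => [|[|[|[|[|[|[|[|]]]]]]]] //= _; lia.
Qed.

Lemma gs_nocmp n : all nocmp (gs n).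
Proof.
rewrite /gs !all_cat /= andbT; elim: n => //= n IH.
by rewrite all_cat IH.
Qed.

Definition outs0 n (j : 'I_3) : nat :=
  match val j with 0 => (12 + 3 * n)%N | _ => 3%N end.
Definition outs1 n (j : 'I_3) : nat :=
  match val j with 0 => (12 + 3 * n)%N | 1 => 2%N | _ => 3%N end.
Definition C0 n := Circuit (gs n) (outs0 n).
Definition C1 n := Circuit (gs n) (outs1 n).

Lemma C_wf n o : (forall j, (o j < 13 + 3 * n)%N) -> circuit_wf (Circuit (gs n) o).
Proof. move=> ho; split => [k hk|j]; first exact: gs_wf_k. by rewrite [gates _]/= size_gs. Qed.

Lemma C0_wf n : circuit_wf (C0 n).
Proof. apply: C_wf => -[[|[|[|k]]] hk] //=; rewrite /outs0 /outs1 /=; lia. Qed.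
Lemma C1_wf n : circuit_wf (C1 n).
Proof. apply: C_wf => -[[|[|[|k]]] hk] //=; rewrite /outs0 /outs1 /=; lia. Qed.

Lemma size_layers_sum n : (\sum_(g <- layers n) gate_size g = 3 * n)%N.
Proof. by elim: n => [|n IH]; rewrite ?big_nil //= big_cat IH /= !big_cons big_nil /=; lia. Qed.

Lemma gs_size n : (circuit_size (C0 n) = 3 * n + 31)%N /\ (circuit_size (C1 n) = 3 * n + 31)%N.
Proof.
rewrite /circuit_size /= /gs !big_cat size_layers_sum /= !big_cons big_nil /=.
have -> : rat_bitsize hlf = 3%N by vm_compute.
have -> : rat_bitsize qtr = 4%N by vm_compute.
have -> : rat_bitsize 1 = 2%N by vm_compute.
have -> : rat_bitsize 0 = 2%N by vm_compute.
split; lia.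
Qed.

Section Vals.
Variable R : realType.
Implicit Types (x : 'rV[R]_3) (y : R).

Lemma clamp_cases y : (clamp01 y = y /\ 0 <= y <= 1) \/ (clamp01 y = 0 /\ y <= 0)
  \/ (clamp01 y = 1 /\ 1 <= y).
Proof.
rewrite /clamp01; have [h0|h0] := boolP (0 <= y).
  rewrite (max_idPr h0); have [h1|h1] := boolP (y <= 1).
    by left; split; [rewrite (min_idPr h1) | apply/andP].
  rewrite -ltNge in h1.
  by right; right; split; [rewrite (min_idPl (ltW h1)) | exact: ltW].
rewrite -ltNge in h0.
rewrite (max_idPl (ltW h0)) (min_idPr ler01).
by right; left; split; [|exact: ltW].
Qed.

Lemma clamp_id y : 0 <= y <= 1 -> clamp01 y = y.
Proof. by move=> /andP[h0 h1]; rewrite /clamp01 (max_idPr h0) (min_idPr h1). Qed.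

Lemma clamp_range y : 0 <= clamp01 y <= 1.
Proof. by case: (clamp_cases y) => [[-> ->]|[[-> _]|[-> _]]] //; rewrite ?lexx ?ler01. Qed.

Lemma clamp_le0 y : y <= 0 -> clamp01 y = 0.
Proof. by case: (clamp_cases y) => [[-> h]|[[-> h]|[-> h]]] h'; lra. Qed.
Lemma clamp_ge1 y : 1 <= y -> clamp01 y = 1.
Proof. by case: (clamp_cases y) => [[-> h]|[[-> h]|[-> h]]] h'; lra. Qed.

Lemma clamp2 y : clamp01 (clamp01 y + clamp01 y) = clamp01 (y + y).
Proof.
case: (clamp_cases y) => [[-> //]|[[-> h]|[-> h]]].
  by rewrite addr0 !clamp_le0 //; lra.
by rewrite !clamp_ge1 //; lra.
Qed.

Definition T y : R := 2 * Num.min y (1 - y).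

Lemma T01 y : 0 <= y <= 1 -> 0 <= T y <= 1.
Proof.
move=> /andP[h0 h1]; rewrite /T minEle; case: ifP => h; apply/andP; split; lra.
Qed.

Lemma min_half y : 0 <= y <= 1 -> 0 <= Num.min y (1 - y) /\ Num.min y (1 - y) <= 2^-1.
Proof. move=> /andP[h0 h1]; rewrite minEle; case: ifP => h; split; lra. Qed.

Lemma iterT01 N y : 0 <= y <= 1 -> 0 <= iter N T y <= 1.
Proof. by move=> h; elim: N => //= N IH; exact: T01. Qed.

Notation E n x k := (nth 0 (evals x (gs n)) k).

Lemma E_gate n x k : (k < 13 + 3 * n)%N ->
  E n x k = gval x (evals x (gs n)) (nth (GConst 0) (gs n) k).
Proof.
move=> hk; have hk' : (k < size (gs n))%N by rewrite size_gs.
exact: (ev_gate x hk' (gs_wf_k _ _ hk')).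
Qed.

Lemma nthL n j i k : (j < n)%N -> (i < 3)%N -> k = (5 + 3 * j + i)%N ->
  nth (GConst 0) (gs n) k = nth (GConst 0) (layer j) i.
Proof. by move=> hj hi ->; exact: nth_gs_layer. Qed.

Lemma nthP n i k : k = (5 + 3 * n + i)%N ->
  nth (GConst 0) (gs n) k = nth (GConst 0) (post (4 + 3 * n)) i.
Proof. by move=> ->; exact: nth_gs_post. Qed.

Lemma ratr_half : ratr hlf = (2 : R)^-1.
Proof. by rewrite /hlf fmorphV rmorph_nat. Qed.
Lemma ratr_quarter : ratr qtr = (4 : R)^-1.
Proof. by rewrite /qtr fmorphV rmorph_nat. Qed.

Section Fixed.
Variables (n : nat) (x : 'rV[R]_3).
Hypothesis hx : in_cube x.
Let a := x ord0 ord0.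
Let b := x ord0 i1.

Lemma ha : 0 <= a <= 1. Proof. exact: hx. Qed.
Lemma hb : 0 <= b <= 1. Proof. exact: hx. Qed.

Lemma E0 : E n x 0 = a.
Proof. by rewrite E_gate //. Qed.
Lemma E1 : E n x 1 = b.
Proof. by rewrite E_gate //. Qed.
Lemma E2 : E n x 2 = 1.
Proof. by rewrite E_gate //= rmorph1 clamp_id // lexx ler01. Qed.
Lemma E3 : E n x 3 = 0.
Proof. by rewrite E_gate //= rmorph0 clamp_id // lexx ler01. Qed.
Lemma E4 : E n x 4 = a.
Proof. by rewrite E_gate //= E0 maxxx clamp_id //; exact: ha. Qed.

Lemma E_layer j : (j < n)%N -> 0 <= E n x (4 + 3 * j) <= 1 ->
  E n x (4 + 3 * j.+1) = T (E n x (4 + 3 * j)).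
Proof.
move=> hj hy; have [m0 m1] := min_half _ hy.
move: hy => /andP[hy0 hy1].
have e0 : E n x (5 + 3 * j) = 1 - E n x (4 + 3 * j).
  rewrite E_gate; last lia.
  rewrite (@nthL n j 0) //=; last lia.
  rewrite E2 clamp_id //; apply/andP; split; lra.
have e1 : E n x (6 + 3 * j) = Num.min (E n x (4 + 3 * j)) (1 - E n x (4 + 3 * j)).
  rewrite E_gate; last lia.
  rewrite (@nthL n j 1) //=; last lia.
  rewrite e0 clamp_id //; apply/andP; split; lra.
rewrite E_gate; last lia.
rewrite (@nthL n j 2) //=; last lia.
rewrite e1 clamp_id /T; first lra.
apply/andP; split; lra.
Qed.

Lemma E_iter j : (j <= n)%N -> E n x (4 + 3 * j) = iter j T a.
Proof.
elim: j => [_|j IH hj]; first by rewrite muln0 addn0 E4.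
have hj' : (j <= n)%N by exact: ltnW.
rewrite E_layer //; last by rewrite IH //; apply: iterT01; exact: ha.
by rewrite IH.
Qed.

Definition gN y := (y + iter n T y) / 2.

Lemma E_out : E n x (12 + 3 * n) = clamp01 (a + b - gN a).
Proof.
have hT := E_iter _ (leqnn n).
have hT01 : 0 <= iter n T a <= 1 by apply: iterT01; exact: ha.
move: (ha) (hb) hT01 => /andP[? ?] /andP[? ?] /andP[? ?].
have p1 : E n x (5 + 3 * n) = a / 2.
  rewrite E_gate; last lia.
  rewrite (@nthP n 0) /=; last lia.
  by rewrite ratr_half E0 clamp_id; [lra| apply/andP; split; lra].
have p2 : E n x (6 + 3 * n) = b / 2.
  rewrite E_gate; last lia.
  rewrite (@nthP n 1) /=; last lia.
  by rewrite ratr_half E1 clamp_id; [lra| apply/andP; split; lra].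
have p3 : E n x (7 + 3 * n) = (a + b) / 2.
  rewrite E_gate; last lia.
  rewrite (@nthP n 2) /=; last lia.
  rewrite (_ : (4 + 3 * n + 1 = 5 + 3 * n)%N); last lia.
  rewrite (_ : (4 + 3 * n + 2 = 6 + 3 * n)%N); last lia.
  by rewrite p1 p2 clamp_id; [lra| apply/andP; split; lra].
have p4 : E n x (8 + 3 * n) = a / 4.
  rewrite E_gate; last lia.
  rewrite (@nthP n 3) /=; last lia.
  by rewrite ratr_quarter E0 clamp_id; [lra| apply/andP; split; lra].
have p5 : E n x (9 + 3 * n) = iter n T a / 4.
  rewrite E_gate; last lia.
  rewrite (@nthP n 4) /=; last lia.
  by rewrite ratr_quarter hT clamp_id; [lra| apply/andP; split; lra].
have p6 : E n x (10 + 3 * n) = (a + iter n T a) / 4.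
  rewrite E_gate; last lia.
  rewrite (@nthP n 5) /=; last lia.
  rewrite (_ : (4 + 3 * n + 4 = 8 + 3 * n)%N); last lia.
  rewrite (_ : (4 + 3 * n + 5 = 9 + 3 * n)%N); last lia.
  by rewrite p4 p5 clamp_id; [lra| apply/andP; split; lra].
have p7 : E n x (11 + 3 * n) = clamp01 ((a + b) / 2 - (a + iter n T a) / 4).
  rewrite E_gate; last lia.
  rewrite (@nthP n 6) /=; last lia.
  rewrite (_ : (4 + 3 * n + 3 = 7 + 3 * n)%N); last lia.
  rewrite (_ : (4 + 3 * n + 6 = 10 + 3 * n)%N); last lia.
  by rewrite p3 p6.
rewrite E_gate; last lia.
rewrite (@nthP n 7) /=; last lia.
rewrite (_ : (4 + 3 * n + 7 = 11 + 3 * n)%N); last lia.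
rewrite p7 clamp2 /gN; congr clamp01; lra.
Qed.

End Fixed.
End Vals.

Section Main.
Variable R : realType.
Implicit Types (x : 'rV[R]_3) (y : R).

Lemma T_cont : continuous (T R).
Proof.
rewrite /T; apply: cM; first exact: ccst.
apply: cmin; first by move=> y; exact: cvg_id.
by apply: cB; [exact: ccst| move=> y; exact: cvg_id].
Qed.

Lemma iterT_cont N : continuous (iter N (T R)).
Proof.
elim: N => [|N IH] /=; first by move=> y; exact: cvg_id.
by move=> y; apply: (continuous_comp (IH y)); exact: T_cont.
Qed.

Lemma iterT_dyadic N j : (j <= 2 ^ N)%N ->
  iter N (T R) (j%:R / (2 ^ N)%:R) = (odd j)%:R.
Proof.
elim: N j => [|N IH] j hj.
  rewrite expn0 divr1 /=; move: hj; rewrite expn0.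
  by case: j => [|[|]].
have hP : 0 < (2 ^ N)%:R :> R by rewrite ltr0n expn_gt0.
rewrite iterSr.
set P := (2 ^ N)%:R : R.
have e : j%:R / (2 ^ N.+1)%:R = (j%:R / P) / 2 :> R.
  rewrite expnS natrM /P; field; exact: lt0r_neq0.
rewrite e; case: (leqP j (2 ^ N)) => hjN.
  have hz : j%:R / P <= 1 :> R.
    by rewrite ler_pdivrMr // mul1r ler_nat.
  have hz0 : 0 <= j%:R / P :> R by apply: divr_ge0.
  rewrite /T (min_idPl _); last lra.
  rewrite (_ : 2 * (j%:R / P / 2) = j%:R / P); last by field.
  exact: IH.
have hz : 1 < j%:R / P :> R.
  by rewrite ltr_pdivlMr // mul1r ltr_nat.
rewrite /T (min_idPr _); last lra.
have hj' : (2 ^ N.+1 - j <= 2 ^ N)%N by rewrite expnS; lia.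
rewrite (_ : 2 * (1 - j%:R / P / 2) = (2 ^ N.+1 - j)%:R / P).
  rewrite IH // oddB // oddX /=.
  by case: (odd j).
rewrite natrB // expnS natrM -/P; field; exact: lt0r_neq0.
Qed.


Lemma ord3 (j : 'I_3) : j = ord0 \/ j = i1 \/ j = i2.
Proof.
case: j => [[|[|[|k]]] hj].
- by left; apply/val_inj.
- by right; left; apply/val_inj.
- by right; right; apply/val_inj.
- by [].
Qed.

Section WithN.
Variable n : nat.
Let N := n.+2.
Let g := gN R N.
Definition F0 : 'rV[R]_3 -> 'rV[R]_3 := Fof (C0 N).
Definition F1 : 'rV[R]_3 -> 'rV[R]_3 := Fof (C1 N).
Definition GG x := clamp01 (x ord0 ord0 + x ord0 i1 - g (x ord0 ord0)).

Lemma F0_0 x : in_cube x -> F0 x ord0 ord0 = GG x.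
Proof. by move=> hx; rewrite mxE /ev /outs0 /= E_out. Qed.
Lemma F1_0 x : in_cube x -> F1 x ord0 ord0 = GG x.
Proof. by move=> hx; rewrite mxE /ev /outs1 /= E_out. Qed.
Lemma F0_1 x : F0 x ord0 i1 = 0.
Proof. by rewrite mxE /ev /= E3. Qed.
Lemma F0_2 x : F0 x ord0 i2 = 0.
Proof. by rewrite mxE /ev /= E3. Qed.
Lemma F1_1 x : F1 x ord0 i1 = 1.
Proof. by rewrite mxE /ev /= E2. Qed.
Lemma F1_2 x : F1 x ord0 i2 = 0.
Proof. by rewrite mxE /ev /= E3. Qed.

Lemma hom_fix x t : in_cube x ->
  homotopy F0 F1 t x = x <-> [/\ x ord0 i1 = t, x ord0 i2 = 0 & x ord0 ord0 = GG x].
Proof.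
move=> hx; have hE j : homotopy F0 F1 t x ord0 j = (1 - t) * F0 x ord0 j + t * F1 x ord0 j.
  by rewrite /homotopy !mxE.
split.
  move=> /rowP h; split.
  - by rewrite -h hE F0_1 F1_1; ring.
  - by rewrite -h hE F0_2 F1_2; ring.
  - by rewrite -{1}h hE F0_0 // F1_0 //; ring.
move=> [h1 h2 h0]; apply/rowP => j; rewrite hE.
case: (ord3 j) => [->|[->|->]].
- by rewrite F0_0 // F1_0 // -h0; ring.
- by rewrite F0_1 F1_1 h1; ring.
- by rewrite F0_2 F1_2 h2; ring.
Qed.

Lemma c_def j : (j <= 2 ^ N)%N ->
  g (j%:R / (2 ^ N)%:R) = (j%:R / (2 ^ N)%:R + (odd j)%:R) / 2.
Proof. by move=> hj; rewrite /g /gN iterT_dyadic. Qed.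

Lemma g0 : g 0 = 0.
Proof.
have := @c_def 0 (leq0n (2 ^ N)); rewrite mul0r /= => ->; by rewrite addr0 mul0r.
Qed.

Lemma P_gt0 : 0 < (2 ^ N)%:R :> R.
Proof. by rewrite ltr0n expn_gt0. Qed.

Lemma g1 : g 1 = 2^-1.
Proof.
have := @c_def _ (leqnn (2 ^ N)); rewrite divff ?lt0r_neq0 ?P_gt0 // => ->.
by rewrite oddX /= addr0 mul1r.
Qed.

Lemma g_bounds y : 0 <= y <= 1 -> y / 2 <= g y /\ g y <= 1 /\ (y < 1 -> g y < 1).
Proof.
move=> hy; have := @iterT01 R N y hy; rewrite /g /gN.
move: hy => /andP[? ?] /andP[? ?]; split; [|split]; try lra.
Qed.

Lemma g_cont : continuous g.
Proof.
rewrite /g /gN => y.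
apply: (@continuousM _ _ (fun y => y + iter N (T R) y) (fun _ => 2^-1)).
  apply: (@continuousD _ _ _ (fun y => y) (fun y => iter N (T R) y)).
    exact: cvg_id.
  exact: iterT_cont.
exact: cst_continuous.
Qed.


Lemma cube0 : in_cube (0 : 'rV[R]_3).
Proof. by move=> i; rewrite mxE lexx ler01. Qed.

Lemma F0_hom x : homotopy F0 F1 0 x = F0 x.
Proof. by rewrite /homotopy subr0 scale1r scale0r addr0. Qed.

Lemma F0_fix0 : F0 0 = 0.
Proof.
rewrite -F0_hom; apply/hom_fix; first exact: cube0.
rewrite /GG !mxE g0 addr0 subr0 clamp_id //; last by rewrite lexx ler01.
Qed.

Lemma F0_uniq (z : 'rV[R]_3) : in_cube z -> F0 z = z -> z = 0.
Proof.
move=> hy; rewrite -F0_hom => /(hom_fix _ _ hy) [h1 h2 h0].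
have hy0 : 0 <= z ord0 ord0 <= 1 by exact: hy.
have [gl [gu _]] := g_bounds _ hy0.
have h00 : z ord0 ord0 = 0.
  move: h0; rewrite /GG h1 addr0.
  case: (clamp_cases _ (z ord0 ord0 - g (z ord0 ord0))) => [[-> _]|[[-> _]|[-> h]]].
  - move: hy0 => /andP[? ?] ?; lra.
  - by [].
  - move: hy0 => /andP[? ?] ?; lra.
apply/rowP => j; rewrite mxE; case: (ord3 j) => [->|[->|->]] //.
Qed.

Definition pu (s : R) := Num.min 1 (2 * s).
Definition pt (s : R) := Num.max (g (pu s)) s.
Definition pp (s : R) : 'rV[R]_3 :=
  \row_j (if j == ord0 then pu s else if j == i1 then pt s else 0).
Definition gam0 (s : R) := (pp s, pt s).

Lemma pu_cont : continuous pu.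
Proof.
apply: cmin; first exact: ccst.
by apply: cM; [exact: ccst | move=> y; exact: cvg_id].
Qed.

Lemma pt_cont : continuous pt.
Proof.
apply: cmax; last by move=> y; exact: cvg_id.
by move=> y; apply: (continuous_comp (pu_cont y)); exact: g_cont.
Qed.

Lemma pp_cont : continuous pp.
Proof.
have := @row3_cont R R (fun j s => if j == ord0 then pu s else if j == i1 then pt s else 0).
apply => j.
case: (j == ord0); first exact: pu_cont.
case: (j == i1); first exact: pt_cont.
exact: ccst.
Qed.

Lemma cpair (T U V : topologicalType) (f : T -> U) (h : T -> V) :
  continuous f -> continuous h -> continuous (fun s => (f s, h s)).
Proof. by move=> cf ch y; apply: cvg_pair; [exact: cf | exact: ch]. Qed.

Lemma gam0_cont : continuous gam0.
Proof. exact: cpair pp_cont pt_cont. Qed.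

Lemma pp0 s : pp s ord0 ord0 = pu s. Proof. by rewrite mxE. Qed.
Lemma pp1 s : pp s ord0 i1 = pt s. Proof. by rewrite mxE. Qed.
Lemma pp2 s : pp s ord0 i2 = 0. Proof. by rewrite mxE. Qed.

Lemma path_vals s : 0 <= s <= 1 ->
  (s <= 2^-1 /\ pu s = 2 * s /\ pt s = g (2 * s)) \/ (2^-1 < s /\ pu s = 1 /\ pt s = s).
Proof.
move=> /andP[s0 s1]; have [hs|hs] := boolP (s <= 2^-1).
  have e : pu s = 2 * s by rewrite /pu (min_idPr _) //; lra.
  left; split => //; split => //; rewrite /pt e (max_idPl _) //.
  have h2 : 0 <= 2 * s <= 1 by apply/andP; split; lra.
  have [gl _] := g_bounds _ h2; lra.
rewrite -ltNge in hs.
have e : pu s = 1 by rewrite /pu (min_idPl _) //; lra.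
right; split => //; split => //; rewrite /pt e g1 (max_idPr _) //; lra.
Qed.

Lemma gam0_fix s : 0 <= s <= 1 -> is_fixpt_pair F0 F1 (gam0 s).
Proof.
move=> hs; have hs' := hs; move: hs' => /andP[s0 s1].
have [pu01 pt01] : 0 <= pu s <= 1 /\ 0 <= pt s <= 1.
  case: (path_vals _ hs) => [[h [-> ->]]|[h [-> ->]]].
    have h2 : 0 <= 2 * s <= 1 by apply/andP; split; lra.
    have [gl [gu _]] := g_bounds _ h2; split; apply/andP; split; lra.
  by split; apply/andP; split; lra.
have hc : in_cube (pp s).
  move=> i; case: (ord3 i) => [->|[->|->]]; rewrite ?pp0 ?pp1 ?pp2 //.
  by rewrite lexx ler01.
split => //=; split => //.
apply/hom_fix => //; split; rewrite ?pp1 ?pp2 //.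
rewrite /GG pp0 pp1.
case: (path_vals _ hs) => [[h [-> ->]]|[h [-> ->]]].
  by rewrite addrK clamp_id // ; apply/andP; split; lra.
by rewrite g1 clamp_ge1 //; lra.
Qed.

Lemma gam0_path : fixpoint_path F0 F1 0 gam0.
Proof.
split; first exact: continuous_subspaceT gam0_cont.
split; first exact: gam0_fix.
split.
  have e : pu 0 = 0 by rewrite /pu mulr0 (min_idPr _) // ler01.
  have e' : pt 0 = 0 by rewrite /pt e g0 maxxx.
  rewrite /gam0 e'; congr pair; apply/rowP => j; rewrite !mxE e e'.
  by case: ifP => //; case: ifP.
have e : pu 1 = 1 by rewrite /pu mulr1 (min_idPl _) // ler1n.
by rewrite /= /pt e g1 (max_idPr _) //; lra.
Qed.


Section Alt.
Variable gam : R -> 'rV[R]_3 * R.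
Hypothesis hp : fixpoint_path F0 F1 0 gam.

Let U s := (gam s).1 ord0 ord0.
Let Tt s := (gam s).2.

Lemma fix_info s : 0 <= s <= 1 -> 0 <= U s <= 1 /\ (U s < 1 -> Tt s = g (U s)).
Proof.
move=> hs; case: hp => _ [hfix _].
have [hc [ht hh]] := hfix s hs.
have [e1 e2 e0] := (hom_fix _ _ hc).1 hh.
have hU : 0 <= U s <= 1 by exact: hc.
split => // hU1.
move: e0; rewrite /GG e1 -/(U s) -/(Tt s).
case: (clamp_cases _ (U s + Tt s - g (U s))) => [[-> _]|[[-> h]|[-> _]]].
- move=> e; lra.
- move=> e; move: h ht; rewrite e g0 => h /andP[? ?]; lra.
- move=> e; lra.
Qed.

Lemma U0 : U 0 = 0.
Proof. by case: hp => _ [_ [h0 _]]; rewrite /U h0 mxE. Qed.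

Lemma U1 : U 1 = 1.
Proof.
case: hp => _ [_ [_ h1]].
have h01 : (0 <= (1:R)) && ((1:R) <= 1) by rewrite lexx ler01.
have [hU hlt] := fix_info _ h01.
have [hlt1|hge] := boolP (U 1 < 1).
  have := hlt hlt1; rewrite /Tt h1 => e.
  have [_ [_ gl]] := g_bounds _ hU; have := gl hlt1; rewrite -e ltxx //.
rewrite -leNgt in hge; move: hU => /andP[_ ?]; lra.
Qed.

Lemma proj_cont : continuous (fun p : 'rV[R]_3 * R => p.1 ord0 ord0).
Proof.
move=> p; apply: (@continuous_comp _ _ _ fst (fun M : 'rV[R]_3 => M ord0 ord0)).
  exact: cvg_fst.
exact: coord_continuous.
Qed.

Lemma U_cont a : 0 <= a -> {within `[a, 1], continuous U}.
Proof.
move=> ha; case: hp => hc _.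
have hc' : {within `[a, 1], continuous gam}.
  have hsub : `[a, 1]%classic `<=` `[0, 1]%classic.
    move=> z /=; rewrite !in_itv /= => /andP[? ?].
    by apply/andP; split => //; apply: le_trans ha _.
  exact: (continuous_subspaceW hsub hc).
have -> : U = (fun p : 'rV[R]_3 * R => p.1 ord0 ord0) \o gam by [].
move=> z; exact: (continuous_comp (hc' z) (proj_cont _)).
Qed.

Definition c (j : nat) : R := j%:R / (2 ^ N)%:R.

Lemma c_lt1 j : (j < 2 ^ N)%N -> c j < 1.
Proof. by move=> hj; rewrite /c ltr_pdivrMr ?P_gt0 // mul1r ltr_nat. Qed.
Lemma c_ge0 j : 0 <= c j.
Proof. by rewrite /c divr_ge0. Qed.
Lemma c_S j : c j.+1 = c j + (2 ^ N)%:R^-1.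
Proof. by rewrite /c -natr1 mulrDl mul1r. Qed.
Lemma delta_lt1 : (2 ^ N)%:R^-1 < 1 :> R.
Proof.
rewrite invf_lt1 ?P_gt0 // ltr1n.
by rewrite /N expnS; have := expn_gt0 2 n.+1; lia.
Qed.

Lemma build M : (M <= 2 ^ N - 1)%N -> exists s : nat -> R,
  (forall i, (i <= M)%N -> 0 <= s i <= 1 /\ U (s i) = c i) /\
  (forall i, (i < M)%N -> s i < s i.+1).
Proof.
elim: M => [_|M IH hM].
  exists (fun _ => 0); split => // i; rewrite leqn0 => /eqP ->.
  by rewrite lexx ler01 U0 /c mul0r.
have [s [hs hinc]] := IH (ltnW hM).
have [/andP[sM0 sM1] usM] := hs M (leqnn M).
have hMN : (M.+1 < 2 ^ N)%N by have := expn_gt0 2 N; lia.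
have cM1 : c M.+1 <= 1 by apply: ltW; apply: c_lt1.
have hd := delta_lt1; have hd0 : 0 < (2 ^ N)%:R^-1 :> R by rewrite invr_gt0 P_gt0.
have [c' hc' uc'] : exists2 c', c' \in `[s M, 1] & U c' = c M.+1.
  apply: IVT => //; first exact: U_cont.
  have cMle : c M <= 1 by move: cM1; rewrite c_S; lra.
  rewrite usM U1 (min_idPl cMle) (max_idPr cMle).
  apply/andP; split; last exact: cM1.
  rewrite c_S; lra.
move: hc'; rewrite in_itv /= => /andP[hc1 hc2].
have hlt : s M < c'.
  rewrite lt_neqAle hc1 andbT; apply/eqP => e; move: uc'; rewrite -e usM c_S; lra.
exists (fun i => if i == M.+1 then c' else s i); split.
  move=> i; rewrite leq_eqVlt; case: eqP => [->|_] /=.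
    move=> _; rewrite uc' hc2 andbT; split => //; apply: le_trans sM0 _; exact: ltW.
  by rewrite ltnS => hi; exact: hs.
move=> i hi; case: (ltnP i M) => hiM.
  by rewrite ifF; [rewrite ifF; [exact: hinc | apply/eqP; lia] | apply/eqP; lia].
have -> : i = M by lia.
by rewrite eqxx ifF //; apply/eqP; lia.
Qed.

Lemma alternations : exists K : nat, (2 ^ (n %/ 1) <= K)%N /\ t_direction_changes_ge gam K.
Proof.
have hN : (2 ^ N = 4 * 2 ^ n)%N by rewrite /N !expnS; lia.
have h2n := expn_gt0 2 n.
exists (2 ^ N - 2)%N; split; first by rewrite divn1 hN; lia.
have [s [hs hinc]] := @build (2 ^ N - 1)%N (leqnn _).
exists s; split; first by have [/andP[]] := hs 0%N (leq0n _).
split; first by have [/andP[]] := hs (2 ^ N - 2).+1 ltac:(lia).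
split; first by move=> i hi; apply: hinc; lia.
move=> i hi.
have tv j : (j <= 2 ^ N - 1)%N -> (gam (s j)).2 = (c j + (odd j)%:R) / 2.
  move=> hj; have [hsj ucj] := hs j hj.
  have [_ ht] := fix_info _ hsj.
  have hc : c j < 1 by apply: c_lt1; lia.
  rewrite -/(Tt (s j)) ht; last by rewrite ucj.
  by rewrite ucj /c c_def //; lia.
rewrite !tv; try lia.
rewrite !c_S /=.
have hd := delta_lt1; have hd0 : 0 < (2 ^ N)%:R^-1 :> R by rewrite invr_gt0 P_gt0.
set d := (2 ^ N)%:R^-1 : R.
have dd : d * d < 1.
  have h : d * d < 1 * d by rewrite ltr_pM2r.
  rewrite mul1r in h; exact: lt_trans h hd.
clear h2n hN hinc hs tv hi.
case: (odd i) => /=;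
  rewrite [X in X < 0](_ : _ = (d * d - 1) / 4); try field;
  set e := d * d in dd *; lra.
Qed.

End Alt.

End WithN.
End Main.

Theorem theorem8 (R : realType) :
  exists a b d : nat, (0 < d)%N /\
  forall n : nat,
  exists (C0 C1 : circuit) (F0 F1 : 'rV[R]_3 -> 'rV[R]_3),
    (circuit_size C0 <= a * n ^ b + a)%N /\
    (circuit_size C1 <= a * n ^ b + a)%N /\
    computes C0 F0 /\ computes C1 F1 /\
    {within @cube R, continuous F0} /\ {within @cube R, continuous F1} /\
    exists x0 : 'rV[R]_3,
      (in_cube x0 /\ F0 x0 = x0 /\ forall y, in_cube y -> F0 y = y -> y = x0) /\
      (exists gam, fixpoint_path F0 F1 x0 gam) /\
      (forall gam, fixpoint_path F0 F1 x0 gam ->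
         exists K : nat, (2 ^ (n %/ d) <= K)%N /\ t_direction_changes_ge gam K).
Proof.
exists 40%N, 1%N, 1%N; split => // n.
exists (C0 n.+2), (C1 n.+2), (F0 R n), (F1 R n).
have [s0 s1] := gs_size n.+2.
split; first by rewrite s0 expn1; lia.
split; first by rewrite s1 expn1; lia.
split; first exact: computes_Fof (C0_wf _) (gs_nocmp _).
split; first exact: computes_Fof (C1_wf _) (gs_nocmp _).
split; first by apply: continuous_subspaceT; exact: Fof_cont.
split; first by apply: continuous_subspaceT; exact: Fof_cont.
exists 0; split.
  split; first exact: cube0.
  split; first exact: F0_fix0.
  exact: F0_uniq.
split; first by exists (gam0 R n); exact: gam0_path.
move=> gam hgam; exact: alternations hgam.
Qed.
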